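(* Let $k=3$ and $\alpha=(\tfrac13,\tfrac25,\tfrac27)$. Then every $\alpha$-communal triple can be written as the sum of one of $[0,0,0],[6,7,5],[8,10,7],[9,11,8]$ and a nonnegative integer linear combination of $[5,6,4],[7,8,6],[11,14,10]$. The number $f(g)$ of $\alpha$-communal triples with entries summing to $g$ has generating function \[ \sum_{g\ge0}f(g)x^g=\frac{1+x^{18}+x^{25}+x^{28}}{(1-x^{15})(1-x^{21})(1-x^{35})}. \] In particular $f(100)=3$, the triples being $[32,40,28]$, $[33,39,28]$, $[33,40,27]$, and $f(101)=1$, the unique triple being $[33,40,28]$.
   Context: A triple $[g_1,g_2,g_3]$ of integers is $\alpha$-communal if $0\le g_i\le\alpha_i(g_1+g_2+g_3)$ for $i=1,2,3$. *)

(* Defs.v *)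
From HB Require Import structures.
From mathcomp Require Import all_boot all_order all_algebra.
Set Implicit Arguments. Unset Strict Implicit. Unset Printing Implicit Defensive.
Import Order.TTheory GRing.Theory Num.Theory.
Local Open Scope ring_scope.

Definition triple := (int * int * int)%type.

Definition t1 (t : triple) : int := t.1.1.
Definition t2 (t : triple) : int := t.1.2.
Definition t3 (t : triple) : int := t.2.

Definition tsum (t : triple) : int := t1 t + t2 t + t3 t.

Definition communal (alpha : rat * rat * rat) (t : triple) : Prop :=
  [/\ 0 <= t1 t /\ (t1 t)%:~R <= alpha.1.1 * (tsum t)%:~R,
      0 <= t2 t /\ (t2 t)%:~R <= alpha.1.2 * (tsum t)%:~R &
      0 <= t3 t /\ (t3 t)%:~R <= alpha.2 * (tsum t)%:~R].

Definition communalb (alpha : rat * rat * rat) (t : triple) : bool :=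
  [&& 0 <= t1 t, (t1 t)%:~R <= alpha.1.1 * (tsum t)%:~R,
      0 <= t2 t, (t2 t)%:~R <= alpha.1.2 * (tsum t)%:~R,
      0 <= t3 t & (t3 t)%:~R <= alpha.2 * (tsum t)%:~R].

Definition alpha0 : rat * rat * rat := (1 / 3, 2 / 5, 2 / 7).

(* f(g) = number of alpha-communal triples with entries summing to g.
   Communal triples have entries in [0, g], so they are exactly counted by
   triples of ordinals in 'I_g.+1. *)
Definition fcount (alpha : rat * rat * rat) (g : nat) : nat :=
  #|[set x : 'I_g.+1 * 'I_g.+1 * 'I_g.+1 |
      communalb alpha ((Posz x.1.1, Posz x.1.2, Posz x.2) : triple)
      && (x.1.1 + x.1.2 + x.2 == g)%N]|.

Definition tadd (s t : triple) : triple := (t1 s + t1 t, t2 s + t2 t, t3 s + t3 t).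
Definition tscale (n : nat) (t : triple) : triple := (t1 t *+ n, t2 t *+ n, t3 t *+ n).

(* Main.v *)
Require Import Defs.
From HB Require Import structures.
From mathcomp Require Import all_boot all_order all_algebra.
From mathcomp Require Import zify ring lra.
Import Order.TTheory GRing.Theory Num.Theory.
Definition B1 j := nth 0%N [:: 0; 6; 8; 9]%N j.
Definition B2 j := nth 0%N [:: 0; 7; 10; 11]%N j.
Definition B3 j := nth 0%N [:: 0; 5; 7; 8]%N j.

Lemma half_ex (u : nat) : exists n p, u = 2 * n + p /\ (p = 0 \/ p = 1).
Proof. exists (u %/ 2), (u %% 2); lia. Qed.

Lemma decomp (a b c : nat) : 3*a <= a+b+c -> 5*b <= 2*(a+b+c) -> 7*c <= 2*(a+b+c) ->
 exists j n1 n2 n3, j < 4 /\ a = B1 j + 5* n1+7* n2+11* n3 /\ b = B2 j + 6* n1+8* n2+14* n3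
   /\ c = B3 j + 4* n1+6* n2+10* n3.
Proof.
move=> ha hb hc.
have [n3 [pu [hu epu]]] := half_ex (a+b+c-3*a).
have [n2 [pv [hv epv]]] := half_ex (2*(a+b+c)-5*b).
have [n1 [pw [hw epw]]] := half_ex (2*(a+b+c)-7*c).
case: epu => ?; case: epv => ?; case: epw => ?; subst.
- by exists 0, n1, n2, n3; rewrite /B1 /B2 /B3 /=; lia.
- lia.
- lia.
- by exists 1, n1, n2, n3; rewrite /B1 /B2 /B3 /=; lia.
- lia.
- by exists 2, n1, n2, n3; rewrite /B1 /B2 /B3 /=; lia.
- by exists 3, n1, n2, n3; rewrite /B1 /B2 /B3 /=; lia.
- lia.
Qed.

Lemma uniq_dec j n1 n2 n3 j' m1 m2 m3 : j < 4 -> j' < 4 ->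
  B1 j + 5* n1+7* n2+11* n3 = B1 j' + 5* m1+7* m2+11* m3 ->
  B2 j + 6* n1+8* n2+14* n3 = B2 j' + 6* m1+8* m2+14* m3 ->
  B3 j + 4* n1+6* n2+10* n3 = B3 j' + 4* m1+6* m2+10* m3 ->
  [/\ j = j', n1 = m1, n2 = m2 & n3 = m3].
Proof.
move=> hj hj'.
have : j = 0 \/ j = 1 \/ j = 2 \/ j = 3 by lia.
have : j' = 0 \/ j' = 1 \/ j' = 2 \/ j' = 3 by lia.
by move=> [->|[->|[->|->]]] [->|[->|[->|->]]]; rewrite /B1 /B2 /B3 /= => ? ? ?; split; lia.
Qed.
Local Open Scope ring_scope.
Lemma lerQ (x s k m : int) (q : rat) : 0 < m%:~R :> rat -> q = k%:~R / m%:~R ->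
  (x%:~R <= q * s%:~R :> rat) = (m * x <= k * s).
Proof.
move=> hm ->; rewrite -(ler_int rat) !intrM.
rewrite mulrAC ler_pdivlMr //.
by rewrite mulrC.
Qed.

Lemma communalE (t : triple) : communal alpha0 t <->
  [/\ 0 <= t1 t /\ 3 * t1 t <= tsum t, 0 <= t2 t /\ 5 * t2 t <= 2 * tsum t &
      0 <= t3 t /\ 7 * t3 t <= 2 * tsum t].
Proof.
rewrite /communal /alpha0 /=.
rewrite (@lerQ _ _ 1 3) // (@lerQ _ _ 2 5) // (@lerQ _ _ 2 7) // mul1r.
by [].
Qed.

Lemma communalbE (t : triple) : communalb alpha0 t <-> communal alpha0 t.
Proof.
rewrite /communalb /communal; split.
  by case/and5P => ? ? ? ? /andP [? ?]; split.
by case=> [[-> ->] [-> ->] [-> ->]].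
Qed.
Lemma part1 (t : triple) : communal alpha0 t ->
     exists2 b : triple,
       b \in [:: ((0, 0, 0) : triple); (6, 7, 5); (8, 10, 7); (9, 11, 8)] &
       exists n1 n2 n3 : nat,
         t = tadd b (tadd (tscale n1 (5, 6, 4))
                         (tadd (tscale n2 (7, 8, 6)) (tscale n3 (11, 14, 10)))).
Proof.
move/communalE; case: t => [[x y] z]; rewrite /tsum /t1 /t2 /t3 /=.
case=> [[hx hx'] [hy hy'] [hz hz']].
move: hx hx' hy hy' hz hz'.
case: x => [a|n]; last by move=> *; lia.
case: y => [b|n]; last by move=> *; lia.
case: z => [c|n]; last by move=> *; lia.
move=> _ ha _ hb _ hc.
have h1 : (3*a <= a+b+c)%N by lia.
have h2 : (5*b <= 2*(a+b+c))%N by lia.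
have h3 : (7*c <= 2*(a+b+c))%N by lia.
have [j [n1 [n2 [n3 [hj [ea [eb ec]]]]]]] := decomp a b c h1 h2 h3.
exists (Posz (B1 j), Posz (B2 j), Posz (B3 j)).
  have : (j = 0 \/ j = 1 \/ j = 2 \/ j = 3)%N by lia.
  by move=> [->|[->|[->|->]]].
exists n1, n2, n3; rewrite /tadd /tscale /t1 /t2 /t3 /=.
congr (_, _, _); lia.
Qed.
Definition sB j := (B1 j + B2 j + B3 j)%N.
Definition Xt K := ('I_4 * 'I_K * 'I_K * 'I_K)%type.
Definition ex K (x : Xt K) : nat := (sB x.1.1.1 + 15 * x.1.1.2 + 21 * x.1.2 + 35 * x.2)%N.
Arguments ex {K}.
Definition phi g K (x : Xt K) : 'I_g.+1 * 'I_g.+1 * 'I_g.+1 :=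
 let j := x.1.1.1 in let a := x.1.1.2 in let b := x.1.2 in let c := x.2 in
 (inord (B1 j + 5 * a + 7 * b + 11 * c)%N, inord (B2 j + 6 * a + 8 * b + 14 * c)%N,
  inord (B3 j + 4 * a + 6 * b + 10 * c)%N).

Lemma communalbN (a b c : nat) : communalb alpha0 (Posz a, Posz b, Posz c) =
  [&& 3 * a <= a + b + c, 5 * b <= 2 * (a + b + c) & 7 * c <= 2 * (a + b + c)]%N.
Proof.
apply/idP/idP.
  move/communalbE/communalE; rewrite /tsum /t1 /t2 /t3 /=.
  case=> [[_ h1] [_ h2] [_ h3]]; apply/and3P; split; lia.
case/and3P => h1 h2 h3; apply/communalbE/communalE; rewrite /tsum /t1 /t2 /t3 /=.
split; split; lia.
Qed.

Lemma fcountE g K : (g <= K)%N -> fcount alpha0 g = #|[set x : Xt K.+1 | ex x == g]|.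
Proof.
move=> hK.
have inj : {in [set x : Xt K.+1 | ex x == g] &, injective (phi g K.+1)}.
  move=> [[[j a] b] c] [[[j' a'] b'] c']; rewrite !inE /ex /sB /= => /eqP h /eqP h'.
  case=> /(congr1 val) e1 /(congr1 val) e2 /(congr1 val) e3.
  rewrite /= !inordK in e1 e2 e3; try lia.
  have [ej ea eb ec] := uniq_dec j a b c j' a' b' c' (ltn_ord j) (ltn_ord j') e1 e2 e3.
  by rewrite (ord_inj ej) (ord_inj ea) (ord_inj eb) (ord_inj ec).
rewrite /fcount -(card_in_imset inj); apply: eq_card => -[[[i hi] [j hj']] [k hk]].
rewrite inE /=; apply/idP/imsetP.
  case/andP; rewrite communalbN => /and3P [h1 h2 h3] /eqP hs0.
  have hs : (i + j + k = g)%N := hs0.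
  have [jj [n1 [n2 [n3 [hj [ea [eb ec]]]]]]] := decomp i j k h1 h2 h3.
  exists (inord jj, inord n1, inord n2, inord n3).
    rewrite inE /ex /sB /= !inordK; try lia.
  rewrite /phi /= !inordK; try lia.
  congr (_, _, _); apply: ord_inj; rewrite inordK /=; lia.
case=> -[[[jj a] b] c]; rewrite inE /ex /sB /= => /eqP hx.
case=> /(congr1 val) /= -> /(congr1 val) /= -> /(congr1 val) /= ->.
rewrite !inordK; try lia.
rewrite communalbN.
have hj := ltn_ord jj.
have : (jj = 0 :> nat \/ jj = 1 :> nat \/ jj = 2 :> nat \/ jj = 3 :> nat)%N by lia.
by move=> [e|[e|[e|e]]]; rewrite e /B1 /B2 /B3 /= in hx *; (apply/andP; split; [apply/and3P; split; lia | rewrite eqn_leq; apply/andP; split; lia]).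
Qed.
Definition eqn (n : nat) (p q : {poly int}) := forall j, (j <= n)%N -> p`_j = q`_j.

Lemma eqnM n p p' q q' : eqn n p p' -> eqn n q q' -> eqn n (p * q) (p' * q').
Proof.
move=> hp hq j hj; rewrite !coefM; apply: eq_bigr => i _.
have hi := ltn_ord i.
by rewrite hp ?hq //; lia.
Qed.

Lemma eqn_1X n d : (n < d)%N -> eqn n (1 - 'X^d) 1.
Proof.
move=> hd j hj; rewrite coefB coefXn.
have -> : (j == d) = false by apply/eqP; lia.
by rewrite subr0.
Qed.

Lemma tele d K : (1 - 'X^d) * \sum_(a < K) 'X^(d * a) = 1 - 'X^(d * K) :> {poly int}.
Proof.
elim: K => [|K IH]; first by rewrite big_ord0 mulr0 muln0 expr0 subrr.
rewrite big_ord_recr /= mulrDr IH mulnS exprD.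
ring.
Qed.

Definition Np : {poly int} := 1 + 'X^18 + 'X^25 + 'X^28.
Definition Cp K : {poly int} :=
  (\sum_(a < K) 'X^(15 * a)) * (\sum_(b < K) 'X^(21 * b)) * (\sum_(c < K) 'X^(35 * c)).

Lemma coefNCp K g : (Np * Cp K)`_g = (#|[set x : Xt K | ex x == g]|)%:R.
Proof.
have hN : Np = \sum_(j < 4) 'X^(sB j).
  by rewrite !big_ord_recl big_ord0 /sB /B1 /B2 /B3 /= expr0 addr0 !addrA.
have hC : Np * Cp K = \sum_(x : Xt K) 'X^(ex x).
  rewrite hN /Cp !mulrA.
  rewrite big_distrlr pair_bigA big_distrlr pair_bigA big_distrlr pair_bigA.
  apply: eq_bigr => [[[[j a] b] c]] _ /=.
  by rewrite -!exprD /ex.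
rewrite hC coef_sum -sum1_card natr_sum [RHS]big_mkcond.
apply: eq_bigr => x _; rewrite coefXn inE eq_sym.
by case: (ex x == g).
Qed.

Lemma PCp K : (1 - 'X^15) * (1 - 'X^21) * (1 - 'X^35) * (Np * Cp K)
  = Np * ((1 - 'X^(15 * K)) * (1 - 'X^(21 * K)) * (1 - 'X^(35 * K))).
Proof.
rewrite -!tele /Cp.
ring.
Qed.

Lemma final n (F : nat -> int) :
  eqn n (\poly_(g < n.+1) F g) (Np * Cp n.+1) ->
  ((1 - 'X^15) * (1 - 'X^21) * (1 - 'X^35) * \poly_(g < n.+1) F g)`_n = Np`_n.
Proof.
move=> hF.
have h1 : eqn n ((1 - 'X^15) * (1 - 'X^21) * (1 - 'X^35)) ((1 - 'X^15) * (1 - 'X^21) * (1 - 'X^35)) by [].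
rewrite (@eqnM n _ _ _ _ h1 hF) //.
rewrite PCp -[Np in RHS]mulr1.
apply: (@eqnM n Np Np _ 1) => //.
rewrite -[1 in X in eqn _ _ X](mulr1 1) -[1 in X in eqn _ _ X](mulr1 1).
apply: eqnM; [apply: eqnM|]. all: rewrite ?mulr1; apply: eqn_1X; lia.
Qed.

Definition mk g (a b c : nat) : 'I_g.+1 * 'I_g.+1 * 'I_g.+1 := (inord a, inord b, inord c).

Lemma char100 (t : triple) : communal alpha0 t /\ tsum t = 100 <->
     t \in [:: ((32, 40, 28) : triple); (33, 39, 28); (33, 40, 27)].
Proof.
split.
  case; move/communalE; case: t => [[x y] z]; rewrite /tsum /t1 /t2 /t3 /=.
  move=> -[[h1 h2] [h3 h4] [h5 h6]] hs.
  have : (x = 32 /\ y = 40 /\ z = 28) \/ (x = 33 /\ y = 39 /\ z = 28) \/ (x = 33 /\ y = 40 /\ z = 27) by lia.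
  by case=> [[-> [-> ->]]|[[-> [-> ->]]|[-> [-> ->]]]].
rewrite !inE => /or3P [] /eqP ->; (split; [apply/communalE; rewrite /tsum /t1 /t2 /t3 /=; split; split; lia | by []]).
Qed.

Lemma char101 (t : triple) : communal alpha0 t /\ tsum t = 101 <-> t = (33, 40, 28).
Proof.
split.
  case; move/communalE; case: t => [[x y] z]; rewrite /tsum /t1 /t2 /t3 /=.
  move=> -[[h1 h2] [h3 h4] [h5 h6]] hs.
  have : (x = 33 /\ y = 40 /\ z = 28) by lia.
  by case=> [-> [-> ->]].
move=> ->; split; [apply/communalE; rewrite /tsum /t1 /t2 /t3 /=; split; split; lia | by []].
Qed.

Lemma fc100 : fcount alpha0 100 = 3%N.
Proof.
rewrite /fcount.
have -> : [set x : 'I_101 * 'I_101 * 'I_101 |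
      communalb alpha0 ((Posz x.1.1, Posz x.1.2, Posz x.2) : triple)
      && (x.1.1 + x.1.2 + x.2 == 100)%N] =
   [set x | x \in [:: mk 100 32 40 28; mk 100 33 39 28; mk 100 33 40 27]].
  apply/setP => -[[[i hi] [j hj]] [k hk]]; rewrite !inE /mk !xpair_eqE -!val_eqE /= !inordK //.
  rewrite communalbN.
  apply/idP/idP.
    case/andP => /and3P [h1 h2 h3] /eqP hs.
    have : (i = 32 /\ j = 40 /\ k = 28) \/ (i = 33 /\ j = 39 /\ k = 28) \/ (i = 33 /\ j = 40 /\ k = 27) by lia.
    by case=> [[-> [-> ->]]|[[-> [-> ->]]|[-> [-> ->]]]].
  by case/or3P => /andP [/andP [/eqP -> /eqP ->] /eqP ->].
transitivity #|[:: mk 100 32 40 28; mk 100 33 39 28; mk 100 33 40 27]|.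
  by apply: eq_card => x; rewrite inE.
by rewrite (card_uniqP _) //= /mk !inE !xpair_eqE -!val_eqE /= !inordK.
Qed.

Lemma fc101 : fcount alpha0 101 = 1%N.
Proof.
rewrite /fcount.
have -> : [set x : 'I_102 * 'I_102 * 'I_102 |
      communalb alpha0 ((Posz x.1.1, Posz x.1.2, Posz x.2) : triple)
      && (x.1.1 + x.1.2 + x.2 == 101)%N] =
   [set x | x \in [:: mk 101 33 40 28]].
  apply/setP => -[[[i hi] [j hj]] [k hk]]; rewrite !inE /mk !xpair_eqE -!val_eqE /= !inordK //.
  rewrite communalbN.
  apply/idP/idP.
    case/andP => /and3P [h1 h2 h3] /eqP hs.
    have : (i = 33 /\ j = 40 /\ k = 28) by lia.
    by case=> [-> [-> ->]].
  by rewrite ?orbF => /andP [/andP [/eqP -> /eqP ->] /eqP ->].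
transitivity #|[:: mk 101 33 40 28]|.
  by apply: eq_card => x; rewrite inE.
by rewrite (card_uniqP _) //= /mk !inE !xpair_eqE -!val_eqE /= !inordK.
Qed.

Theorem mainTheorem12 :
  (forall t : triple, communal alpha0 t ->
     exists2 b : triple,
       b \in [:: ((0, 0, 0) : triple); (6, 7, 5); (8, 10, 7); (9, 11, 8)] &
       exists n1 n2 n3 : nat,
         t = tadd b (tadd (tscale n1 (5, 6, 4))
                         (tadd (tscale n2 (7, 8, 6)) (tscale n3 (11, 14, 10)))))
  /\
  (forall n : nat,
     ((1 - 'X^15) * (1 - 'X^21) * (1 - 'X^35)
        * \poly_(g < n.+1) ((fcount alpha0 g)%:R : int))`_n
     = (1 + 'X^18 + 'X^25 + 'X^28 : {poly int})`_n)
  /\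
  (fcount alpha0 100 = 3%N /\
   forall t : triple, (communal alpha0 t /\ tsum t = 100) <->
     t \in [:: ((32, 40, 28) : triple); (33, 39, 28); (33, 40, 27)])
  /\
  (fcount alpha0 101 = 1%N /\
   forall t : triple, (communal alpha0 t /\ tsum t = 101) <->
     t = (33, 40, 28)).
Proof.
split; first exact: part1.
split.
  move=> n; apply: final => j hj.
  rewrite coef_poly ltnS hj coefNCp.
  by rewrite (@fcountE j n hj).
split; first by split; [exact: fc100 | exact: char100].
by split; [exact: fc101 | exact: char101].
Qed.
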